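(* Let $\mathbb{Z}$ be as in the context and let $\kappa:\mathbb{Z}\times\mathbb{Z}\to\mathbb{R}_{>0}$ be a continuous kernel bounded below by a constant $\kappa_\wedge>0$. Then for any Borel probability measure $\mu$ on $\mathbb{Z}$ and any $f,g\in C(\mathbb{Z})$, $$\|\mathcal{K}_\mu[f]-\mathcal{K}_\mu[g]\|\le\|f-g\|.$$ Consequently, $\bar{\mathcal{T}}_\mu:=\mathcal{K}_\mu\circ\bar{\mathcal{T}}:C(\mathbb{Z})\to C(\mathbb{Z})$ is a $\gamma$-contraction in $\|\cdot\|$, and it has a unique fixed point $q^*_\mu\in C(\mathbb{Z})$ with $\|q^*_\mu\|\le 1/(1-\gamma)$.
   Context: Spaces. Let $\gamma\in(0,1)$, let $\mathbb{X}\subset\mathbb{R}^{d_{\mathbb{X}}}$ be nonempty and compact, and let $\mathbb{A}$ be a nonempty compact subset of some $\mathbb{R}^{d_{\mathbb{A}}}$ or a finite set. Put $\mathbb{Z}=\mathbb{X}\times\mathbb{A}$. $C(\mathbb{Z})$ is the space of continuous real functions with the sup norm $\|\cdot\|$. Smoothing operator. $\mathcal{K}_\mu[q](z)=\int\kappa(z,u)q(u)\mu(du)/\int\kappa(z,u)\mu(du)$. Bellman operator. $P(\cdot\mid x,a)$ is a transition kernel on $\mathbb{X}$ with $P(B\mid z)=\psi(\{w:f(z,w)\in B\})$, where $f:\mathbb{Z}\times\mathbb{W}\to\mathbb{X}$ is continuous and $\psi$ is a probability measure on a Borel set $\mathbb{W}\subset\mathbb{R}^{d_{\mathbb{W}}}$.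 The function $r\in C(\mathbb{Z})$ has $\|r\|\le1$. The clipping map is $\Pi(y)=\max\{\min\{y,1/(1-\gamma)\},-1/(1-\gamma)\}$, and $\bar{\mathcal{T}}[Q](x,a)=r(x,a)+\gamma\int_{\mathbb{X}}\max_{a'\in\mathbb{A}}\Pi(Q(x',a'))\,P(dx'\mid x,a)$. Under these assumptions, $\bar{\mathcal{T}}$ maps $C(\mathbb{Z})$ into itself and is a $\gamma$-contraction in $\|\cdot\|$. *)

(* Defs.v *)
From HB Require Import structures.
From mathcomp Require Import all_boot all_order all_algebra.
From mathcomp Require Import all_classical all_reals all_analysis.
Set Implicit Arguments. Unset Strict Implicit. Unset Printing Implicit Defensive.
Import Order.TTheory GRing.Theory Num.Theory.
Import numFieldNormedType.Exports.
Local Open Scope classical_set_scope.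
Local Open Scope ring_scope.

(* Ambient space of state-action pairs: R^dX x R^dA (product topology). *)
Definition ZT (R : realType) (dX dA : nat) := ('rV[R]_dX * 'rV[R]_dA)%type.

Definition ZB (R : realType) (dX dA : nat) :=
  g_sigma_algebraType (@open (ZT R dX dA)).

Definition WB (R : realType) (dW : nat) :=
  g_sigma_algebraType (@open 'rV[R]_dW).

Definition Cfun {T : topologicalType} (R : realType) (Z : set T) (q : T -> R) :=
  {within Z, continuous q}.

Definition supnorm {T : Type} (R : realType) (Z : set T) (q : T -> R) : R :=
  sup [set `|q z| | z in Z].

Definition clip (R : realType) (gamma : R) (y : R) : R :=
  Num.max (Num.min y (1 / (1 - gamma))) (- (1 / (1 - gamma))).

Definition smooth (R : realType) (dX dA : nat) (Z : set (ZT R dX dA))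
  (kappa : ZT R dX dA * ZT R dX dA -> R) (mu : {measure set (ZB R dX dA) -> \bar R})
  (q : ZT R dX dA -> R) (z : ZT R dX dA) : R :=
  Rintegral mu (Z : set (ZB R dX dA)) (fun u : ZB R dX dA => kappa (z, u) * q u) /
  Rintegral mu (Z : set (ZB R dX dA)) (fun u : ZB R dX dA => kappa (z, u)).

(* Bellman operator: the integral against P(dx'|z), where P(.|z) is the
   image of psi under w |-> f(z,w), written as the integral over W against psi. *)
Definition bellman (R : realType) (dX dA dW : nat) (gamma : R)
  (A : set 'rV[R]_dA) (W : set 'rV[R]_dW)
  (psi : {measure set (WB R dW) -> \bar R})
  (f : ZT R dX dA * 'rV[R]_dW -> 'rV[R]_dX) (r : ZT R dX dA -> R)
  (Q : ZT R dX dA -> R) (z : ZT R dX dA) : R :=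
  r z + gamma * Rintegral psi (W : set (WB R dW))
    (fun w : WB R dW => sup [set clip gamma (Q (f (z, w), a')) | a' in A]).

(* Main.v *)
Require Import Defs.
From HB Require Import structures.
From mathcomp Require Import all_boot all_order all_algebra.
From mathcomp Require Import all_classical all_reals all_analysis.
Import Order.TTheory GRing.Theory Num.Theory.
Import numFieldNormedType.Exports.
Local Open Scope classical_set_scope.
Local Open Scope ring_scope.

From mathcomp Require Import ring lra measurable_realfun.

Set Implicit Arguments. Unset Strict Implicit.
Section basic.
Variable R : realType.

Lemma sup_img_le {T} (A : set T) (F G : T -> R) (B e : R) : A !=set0 ->
  (forall a, A a -> G a <= B) -> (forall a, A a -> F a <= G a + e) ->
  sup [set F a | a in A] <= sup [set G a | a in A] + e.
Proof.
move=> [a0 Aa0] GB FG; apply: ge_sup; first by exists (F a0), a0.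
move=> _ [a Aa <-]; apply: (le_trans (FG a Aa)); rewrite lerD2r.
apply: ub_le_sup; last by exists a.
by exists B => _ [b Ab <-]; exact: GB.
Qed.

Lemma sup_img_diff {T} (A : set T) (F G : T -> R) (B e : R) : A !=set0 ->
  (forall a, A a -> `|F a| <= B) -> (forall a, A a -> `|G a| <= B) ->
  (forall a, A a -> `|F a - G a| <= e) ->
  `|sup [set F a | a in A] - sup [set G a | a in A]| <= e.
Proof.
move=> A0 FB GB FG; rewrite ler_norml; apply/andP; split.
  suff : sup [set G a | a in A] <= sup [set F a | a in A] + e by lra.
  apply: (@sup_img_le _ A G F B e) => // a Aa.
    by have := FB a Aa; rewrite ler_norml => /andP[].
  by have := FG a Aa; rewrite ler_norml => /andP[]; lra.
suff : sup [set F a | a in A] <= sup [set G a | a in A] + e by lra.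
apply: (@sup_img_le _ A F G B e) => // a Aa.
  by have := GB a Aa; rewrite ler_norml => /andP[].
by have := FG a Aa; rewrite ler_norml => /andP[]; lra.
Qed.

Lemma sup_img_bound {T} (A : set T) (F : T -> R) (B : R) : A !=set0 ->
  (forall a, A a -> `|F a| <= B) -> `|sup [set F a | a in A]| <= B.
Proof.
move=> [a0 Aa0] FB; rewrite ler_norml; apply/andP; split.
  have := FB a0 Aa0; rewrite ler_norml => /andP[h _]; apply: (le_trans h).
  apply: ub_le_sup; last by exists a0.
  by exists B => _ [b Ab <-]; have := FB b Ab; rewrite ler_norml => /andP[].
apply: ge_sup; first by exists (F a0), a0.
by move=> _ [b Ab <-]; have := FB b Ab; rewrite ler_norml => /andP[].
Qed.

Lemma supnorm_ub {T} (Z : set T) (q : T -> R) (M : R) :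
  (forall z, Z z -> `|q z| <= M) -> forall z, Z z -> `|q z| <= supnorm Z q.
Proof.
move=> qM z Zz; apply: ub_le_sup; last by exists z.
by exists M => _ [y Zy <-]; exact: qM.
Qed.

Lemma supnorm_le {T} (Z : set T) (q : T -> R) (M : R) : Z !=set0 ->
  (forall z, Z z -> `|q z| <= M) -> supnorm Z q <= M.
Proof.
move=> [z0 Zz0] qM; apply: ge_sup; first by exists `|q z0|, z0.
by move=> _ [y Zy <-]; exact: qM.
Qed.

Lemma supnorm_ge0 {T} (Z : set T) (q : T -> R) (M : R) : Z !=set0 ->
  (forall z, Z z -> `|q z| <= M) -> 0 <= supnorm Z q.
Proof.
move=> [z0 Zz0] qM; exact: le_trans (normr_ge0 _) (supnorm_ub qM Zz0).
Qed.

Lemma cont_bounded {T : topologicalType} (Z : set T) (q : T -> R) :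
  compact Z -> {within Z, continuous q} -> exists M, forall z, Z z -> `|q z| <= M.
Proof.
move=> cZ cq; have := compact_bounded (continuous_compact cq cZ).
move=> [M [_ HM]]; exists (`|M| + 1) => z Zz.
apply: (HM (`|M| + 1)); last by exists z.
by rewrite (le_lt_trans (ler_norm M)) // ltrDl.
Qed.

Lemma cont_measurable {T : normedModType R} (D : set T) (q : T -> R) :
  measurable (D : set (g_sigma_algebraType (@open T))) ->
  {within D, continuous q} ->
  measurable_fun (D : set (g_sigma_algebraType (@open T))) q.
Proof.
move=> mD /continuousP cq; apply: (@measurability _ _ (g_sigma_algebraType (@open T)) R D q _ (RGenOpens.measurableE R)).
move=> _ [_ [a [b ->] <-]].
have /open_subspaceP [V oV VD] := cq _ (@interval_open R (BRight a) (BLeft b) erefl erefl).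
rewrite setIC -VD; apply: measurableI => //.
by apply: sub_sigma_algebra.
Qed.

Lemma tube {T1 T2 : topologicalType} (S : set T1) (K : set T2)
  (F : T1 * T2 -> R) (x : T1) (e : R) :
  compact K -> {within S `*` K, continuous F} -> S x -> 0 < e ->
  \forall x' \near x, S x' -> forall y, K y -> `|F (x', y) - F (x, y)| < e.
Proof.
move=> cK cF Sx e0.
have cF' := (subspace_continuousP _ F).1 cF.
have H : \forall i \near x, K `<=` (fun y => S i -> `|F (i,y) - F (x,y)| < e).
  apply: ((near_covering_withinP K).2 ((compact_near_coveringP K).1 cK)).
  move=> y Ky.
have := cF' (x, y) (conj Sx Ky).
move/cvgrPdist_lt/(_ (e / 2)) => /(_ _) h2.
have {}h2 := h2 (divr_gt0 e0 (ltr0Sn _ 1)).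
have h3 : \forall p \near (x, y), (S `*` K) p -> `|F (x, y) - F p| < e / 2 by exact: h2.
case: h3 => -[A B] /= [nA nB] AB; exists (B, A) => //= -[y1 i] [By1 Ai] Ky1 Si.
have a1 := AB (i, y1) (conj Ai By1) (conj Si Ky1).
have a2 := AB (x, y1) (conj (nbhs_singleton nA) By1) (conj Sx Ky1).
rewrite /= in a1 a2.
have := ler_distD (F (x, y)) (F (i, y1)) (F (x, y1)).
rewrite distrC in a1.
move=> h; apply: (le_lt_trans h).
by rewrite (splitr e) ltrD.
apply: (filterS _ H).
by move=> i Hi Si y Ky; exact: Hi.
Qed.

Lemma clip_lip (g x y : R) : `|clip g x - clip g y| <= `|x - y|.
Proof.
rewrite /clip; set c := 1 / (1 - g).
have nb : forall a b : R, (-`|a - b| <= a - b) /\ (a - b <= `|a - b|).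
  move=> a b; split; last exact: ler_norm.
  by rewrite lerNl -normrN opprB; exact: ler_norm.
have m1 : forall a b : R, `|Num.min a c - Num.min b c| <= `|a - b|.
  move=> a b; have [n1 n2] := nb a b.
  rewrite /Num.min; case: ifPn; rewrite ?ltNge ?negbK => ha; case: ifPn;
  rewrite ?ltNge ?negbK => hb; rewrite ler_norml; apply/andP; split; lra.
have m2 : forall a b : R, `|Num.max a (- c) - Num.max b (- c)| <= `|a - b|.
  move=> a b; have [n1 n2] := nb a b.
  rewrite /Num.max; case: ifPn; rewrite ?ltNge ?negbK => ha; case: ifPn;
  rewrite ?ltNge ?negbK => hb; rewrite ler_norml; apply/andP; split; lra.
exact: le_trans (m2 _ _) (m1 _ _).
Qed.

Lemma clip_bound (g x : R) : 0 <= 1 / (1 - g) -> `|clip g x| <= 1 / (1 - g).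
Proof.
rewrite /clip; set c := 1 / (1 - g) => c0.
rewrite ler_norml; apply/andP; split.
  by rewrite le_max lexx orbT.
rewrite ge_max ge_min lexx orbT /=; lra.
Qed.

Lemma within_prod_nbhs {T1 T2 U : topologicalType} (S : set T1) (K : set T2)
  (F : T1 * T2 -> U) x y : {within S `*` K, continuous F} -> S x -> K y ->
  forall V, nbhs (F (x, y)) V ->
  \forall x' \near x & y' \near y, S x' -> K y' -> V (F (x', y')).
Proof.
move=> cF Sx Ky V nV.
have := (subspace_continuousP _ F).1 cF (x, y) (conj Sx Ky) V nV.
case=> -[A' B'] /= [nA nB] AB; exists (A', B') => // -[x' y'] [Ax By] Sx' Ky'.
exact: (AB (x', y')).
Qed.

Lemma cont_snd {T1 T2 U : topologicalType} (S : set T1) (K : set T2)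
  (F : T1 * T2 -> U) x : {within S `*` K, continuous F} -> S x ->
  {within K, continuous (fun y => F (x, y))}.
Proof.
move=> cF Sx; apply/subspace_continuousP => y Ky V nV.
have [[A' B'] /= [nA nB] AB] := within_prod_nbhs cF Sx Ky nV.
apply: (filterS _ nB) => y' By' Ky'.
exact: (AB (x, y') (conj (nbhs_singleton nA) By') Sx Ky').
Qed.

Lemma cont_fst {T1 T2 U : topologicalType} (S : set T1) (K : set T2)
  (F : T1 * T2 -> U) y : {within S `*` K, continuous F} -> K y ->
  {within S, continuous (fun x => F (x, y))}.
Proof.
move=> cF Ky; apply/subspace_continuousP => x Sx V nV.
have [[A' B'] /= [nA nB] AB] := within_prod_nbhs cF Sx Ky nV.
apply: (filterS _ nA) => x' Ax' Sx'.
exact: (AB (x', y) (conj Ax' (nbhs_singleton nB)) Sx' Ky).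
Qed.

Lemma seq_within {T : pseudoMetricType R} (Z : set T) (h : T -> R) z : Z z ->
  (forall u : nat -> T, (forall n, Z (u n)) -> u n @[n --> \oo] --> z ->
     h (u n) @[n --> \oo] --> h z) ->
  h @ within Z (nbhs z) --> h z.
Proof.
move=> Zz Hs; apply/cvgrPdist_lt => e e0.
apply: contrapT => Hn.
have Hex : forall n : nat, exists y, [/\ ball z n.+1%:R^-1 y, Z y & e <= `|h z - h y|].
  move=> n; apply: contrapT => Hno; apply: Hn.
  rewrite near_withinE; apply/nbhs_ballP; exists n.+1%:R^-1 => /=.
    by rewrite invr_gt0.
  by move=> y Bzy Zy; rewrite ltNge; apply/negP => Hle; apply: Hno; exists y; split.
have [u Hu] := choice Hex.
have uz : u n @[n --> \oo] --> z.
  apply/cvg_ballP => eps eps0.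
  have := near_infty_natSinv_lt (PosNum eps0).
  apply: filterS => n /= Hn'.
  by case: (Hu n) => Bn _ _; apply: le_ball Bn; exact: ltW.
have := Hs u (fun n => let: And3 _ Zn _ := Hu n in Zn) uz.
move=> /cvgrPdist_lt /(_ e e0) [N _ HN].
case: (Hu N) => _ _ HeN.
by have := HN N (leqnn N); rewrite ltNge HeN.
Qed.

Lemma seq_to_within {T : topologicalType} (Z : set T) (u : nat -> T) (z : T) :
  (forall n, Z (u n)) -> u n @[n --> \oo] --> z ->
  u n @[n --> \oo] --> within Z (nbhs z).
Proof.
move=> Zu uz P HP; have HP' : \forall y \near z, Z y -> P y by exact: HP.
move: (uz _ HP') => H.
have H2 : \forall n \near \oo, Z (u n) -> P (u n) by exact: H.
suff : \forall n \near \oo, P (u n) by [].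
by apply: filterS H2 => n Hn; exact: Hn (Zu n).
Qed.

Lemma geo_small (g K e : R) : 0 <= g < 1 -> 0 < e -> exists n : nat, K * g ^+ n < e.
Proof.
move=> /andP[g0 g1] e0.
have h : `|g| < 1 by rewrite ger0_norm.
have H : (fun n : nat => K * g ^+ n) @ \oo --> (0 : R).
  rewrite -(mulr0 K); apply: cvgM; [exact: cvg_cst | exact: cvg_expr].
move/cvgrPdist_lt: H => /(_ e e0) [N _ HN]; exists N; have := HN N (leqnn N).
by rewrite sub0r normrN => /(le_lt_trans (ler_norm _)).
Qed.

Lemma norm_small (x : R) : (forall e, 0 < e -> `|x| < e) -> x = 0.
Proof.
move=> H; apply/eqP; rewrite -normr_eq0; apply/negPn/negP => hx.
have hx0 : 0 < `|x| by rewrite lt_neqAle eq_sym hx normr_ge0.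
by have := H `|x| hx0; rewrite ltxx.
Qed.

Lemma fixpoint_gen {T : topologicalType} (Z : set T)
  (Phi : (T -> R) -> (T -> R)) (g : R) :
  compact Z -> Z !=set0 -> 0 <= g < 1 ->
  (forall Q, Cfun Z Q -> Cfun Z (Phi Q)) ->
  (forall Q1 Q2, Cfun Z Q1 -> Cfun Z Q2 -> forall z, Z z ->
     `|Phi Q1 z - Phi Q2 z| <= g * supnorm Z (Q1 \- Q2)) ->
  exists qs, Cfun Z qs /\ forall z, Z z -> Phi qs z = qs z.
Proof.
move=> cZ Z0 /andP[g0 g1] hC hL.
have g1' : 0 < 1 - g by rewrite subr_gt0.
pose q n := iter n Phi (fun _ => 0).
have cq n : Cfun Z (q n).
  by elim: n => [|n IH] /=; [move=> x; exact: cvg_cst | exact: hC].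
have bndB : forall Q1 Q2 : T -> R, Cfun Z Q1 -> Cfun Z Q2 ->
    exists M, forall z, Z z -> `|(Q1 \- Q2) z| <= M.
  move=> Q1 Q2 c1 c2; have [M1 H1] := cont_bounded cZ c1.
  have [M2 H2] := cont_bounded cZ c2.
  exists (M1 + M2) => z Zz /=; apply: le_trans (ler_normB _ _) _.
  by rewrite lerD // ?H1 ?H2.
pose d := supnorm Z (q 1%N \- q 0%N).
have [M01 H01] := bndB _ _ (cq 1%N) (cq 0%N).
have d0 : 0 <= d by exact: supnorm_ge0 Z0 H01.
have step n : forall z, Z z -> `|q n.+1 z - q n z| <= d * g ^+ n.
  elim: n => [|n IH] z Zz.
    by rewrite expr0 mulr1; exact: (supnorm_ub H01 Zz).
  rewrite /= -/(q n.+1) -/(q n).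
  apply: le_trans (hL _ _ (cq n.+1) (cq n) z Zz) _.
  rewrite exprS mulrCA ler_wpM2l //.
  apply: supnorm_le Z0 _ => u Zu; exact: IH.
have acc n m : forall z, Z z ->
    `|q (n + m)%N z - q n z| <= d * g ^+ n * (1 - g ^+ m) / (1 - g).
  elim: m => [|m IH] z Zz.
    by rewrite addn0 subrr normr0 expr0 subrr mulr0 mul0r.
  rewrite addnS.
  apply: le_trans (ler_distD (q (n + m)%N z) _ _) _.
  apply: le_trans (lerD (step _ z Zz) (IH z Zz)) _.
  rewrite exprD exprS le_eqVlt; apply/orP; left; apply/eqP; field.
  by rewrite gt_eqF.
pose B n := d * g ^+ n / (1 - g).
have acc' n m z : Z z -> `|q (n + m)%N z - q n z| <= B n.
  move=> Zz; apply: le_trans (acc n m z Zz) _.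
  rewrite /B ler_pM2r ?invr_gt0 //.
  rewrite -[X in _ <= X]mulr1; apply: ler_wpM2l; first by rewrite mulr_ge0 ?exprn_ge0.
  by rewrite lerBlDr lerDl exprn_ge0.
have accN n m z : Z z -> (n <= m)%N -> `|q m z - q n z| <= B n.
  by move=> Zz nm; rewrite -(subnKC nm); exact: acc'.
have B0 n : 0 <= B n.
  by rewrite /B; apply: divr_ge0; [apply: mulr_ge0 => //; exact: exprn_ge0 | exact: ltW].
have cv z : Z z -> cvgn (fun n => q n z).
  move=> Zz; apply/cauchy_cvgP; apply/cauchy_ballP => e e0.
  have [N HN] := geo_small (2 * d / (1 - g)) (introT andP (conj g0 g1)) e0.
  exists ([set y | exists2 n, (N <= n)%N & y = q n z],
          [set y | exists2 n, (N <= n)%N & y = q n z]).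
    by split; exists N => // n /= Nn; exists n.
  move=> [x y] [[n Nn ->] [m Nm ->]] /=.
  rewrite -ball_normE /ball_ /=.
  apply: le_lt_trans (ler_distD (q N z) _ _) _.
  apply: le_lt_trans (lerD (accN _ _ _ Zz Nn) _) _.
    by rewrite distrC; exact: (accN _ _ _ Zz Nm).
  apply: le_lt_trans HN; rewrite /B le_eqVlt; apply/orP; left; apply/eqP.
  field; by rewrite gt_eqF.
pose qs z := limn (fun n => q n z).
have unif n z : Z z -> `|qs z - q n z| <= B n.
  move=> Zz.
  have L : (fun m => `|q m z - q n z|) @ \oo --> `|qs z - q n z|.
    by apply: cvg_norm; apply: cvgB; [exact: cv | exact: cvg_cst].
  have H : \forall m \near \oo, `|q m z - q n z| <= B n.
    by exists n => // m /= nm; exact: accN.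
  exact: (closed_cvg _ (@closed_le R (B n)) H _ L).
have bq n : exists M, forall z, Z z -> `|(qs \- q n) z| <= M.
  by exists (B n) => z Zz; exact: unif.
have cqs : Cfun Z qs.
  apply/subspace_continuousP => z Zz; apply/cvgrPdist_lt => e e0.
  have e3 : 0 < e / 3 by rewrite divr_gt0.
  have [n Hn] := geo_small (d / (1 - g)) (introT andP (conj g0 g1)) e3.
  have Bn : B n < e / 3 by rewrite /B mulrAC.
  have := (subspace_continuousP _ _).1 (cq n) z Zz.
  move/cvgrPdist_lt => /(_ _ e3).
  rewrite !near_withinE; apply: filterS => t Ht Zt.
  have h1 := unif n z Zz; have h2 := unif n t Zt; have h3 := Ht Zt.
  have : `|qs z - qs t| <= `|qs z - q n z| + `|q n z - q n t| + `|q n t - qs t|.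
    apply: le_trans (ler_distD (q n t) _ _) _.
    by rewrite lerD2r; exact: ler_distD.
  rewrite (distrC (q n t)) => h4.
  lra.
exists qs; split => // z Zz.
apply/subr0_eq/norm_small => e e0.
have [n Hn] := geo_small (2 * d / (1 - g)) (introT andP (conj g0 g1)) e0.
apply: le_lt_trans (ler_distD (q n.+1 z) _ _) _.
have h1 : `|Phi qs z - q n.+1 z| <= g * B n.
  apply: le_trans (hL _ _ cqs (cq n) z Zz) _.
  rewrite ler_wpM2l //; apply: supnorm_le Z0 _ => u Zu; exact: unif.
have h2 : `|q n.+1 z - qs z| <= B n.+1 by rewrite distrC; exact: unif.
apply: le_lt_trans (lerD h1 h2) _; apply: le_lt_trans Hn.
rewrite /B exprS.
have gn : 0 <= d * g ^+ n / (1 - g).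
  by apply: divr_ge0; [apply: mulr_ge0 => //; exact: exprn_ge0 | exact: ltW].
have gg : g * (d * g ^+ n / (1 - g)) <= d * g ^+ n / (1 - g).
  by rewrite -[X in _ <= X]mul1r ler_wpM2r // ltW.
have -> : d * (g * g ^+ n) / (1 - g) = g * (d * g ^+ n / (1 - g)).
  by rewrite mulrCA !mulrA.
have -> : 2 * d / (1 - g) * g ^+ n = 2 * (d * g ^+ n / (1 - g)).
  by rewrite mulrAC !mulrA.
lra.
Qed.
End basic.

Section main.
Variables (R : realType) (dX dA dW : nat) (gamma : R)
  (X : set 'rV[R]_dX) (A : set 'rV[R]_dA) (W : set 'rV[R]_dW)
  (psi : probability (WB R dW) R)
  (f : ZT R dX dA * 'rV[R]_dW -> 'rV[R]_dX) (r : ZT R dX dA -> R)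
  (kappa : ZT R dX dA * ZT R dX dA -> R) (kmin : R)
  (mu : probability (ZB R dX dA) R).
Hypotheses (hg : 0 < gamma < 1) (X0 : X !=set0) (cX : compact X)
  (A0 : A !=set0) (cA : compact A)
  (mW : measurable (W : set (WB R dW))) (psiW : psi (W : set (WB R dW)) = 1%E)
  (cf : {within (X `*` A) `*` W, continuous f})
  (fX : forall z w, (X `*` A) z -> W w -> X (f (z, w)))
  (cr : {within X `*` A, continuous r})
  (rb : forall z, (X `*` A) z -> `|r z| <= 1)
  (ck : {within (X `*` A) `*` (X `*` A), continuous kappa})
  (kpos : forall z u, (X `*` A) z -> (X `*` A) u -> 0 < kappa (z, u))
  (km0 : 0 < kmin)
  (kle : forall z u, (X `*` A) z -> (X `*` A) u -> kmin <= kappa (z, u))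
  (muZ : mu (X `*` A : set (ZB R dX dA)) = 1%E).

Local Notation Z := (X `*` A).
Local Notation ZB' := (ZB R dX dA).
Local Notation T := (ZT R dX dA).

Lemma cZ : compact Z. Proof. exact: compact_setX. Qed.

Lemma mZ : measurable (Z : set ZB').
Proof.
have cl : closed Z := compact_closed (@norm_hausdorff R T) cZ.
rewrite -[Z]setCK; apply: measurableC; apply: sub_sigma_algebra.
exact: closed_openC.
Qed.

Lemma Z0 : Z !=set0.
Proof. by case: X0 => x Xx; case: A0 => a Aa; exists (x, a). Qed.

Lemma cmeas (g : T -> R) : Cfun Z g -> measurable_fun (Z : set ZB') g.
Proof. by move=> cg; exact: (cont_measurable mZ cg). Qed.

Lemma integ (g : T -> R) : measurable_fun (Z : set ZB') g ->
  (exists M, forall u, Z u -> `|g u| <= M) ->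
  mu.-integrable (Z : set ZB') (EFin \o g).
Proof.
move=> mg [M HM]; apply: measurable_bounded_integrable => //.
- exact: mZ.
- by rewrite (le_lt_trans (probability_le1 mu mZ)) // ltry.
- exists M; split; first exact: num_real.
  by move=> y My u Zu; rewrite /= (le_trans (HM u Zu)) // ltW.
Qed.

Lemma cinteg (g : T -> R) : Cfun Z g -> mu.-integrable (Z : set ZB') (EFin \o g).
Proof. move=> cg; apply: integ; [exact: cmeas | exact: cont_bounded cZ cg]. Qed.

Lemma kcont z : Z z -> Cfun Z (fun u => kappa (z, u)).
Proof. by move=> Zz; apply: (cont_snd ck Zz). Qed.


Lemma cbound (g : T -> R) : Cfun Z g -> exists M, forall u, Z u -> `|g u| <= M.
Proof. exact: cont_bounded cZ. Qed.

Lemma integM (g h : T -> R) : Cfun Z g -> Cfun Z h ->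
  mu.-integrable (Z : set ZB') (EFin \o (fun u => g u * h u)).
Proof.
move=> cg ch; apply: integ; first exact: measurable_funM (cmeas cg) (cmeas ch).
have [Mg HMg] := cbound cg; have [Mh HMh] := cbound ch.
exists (Mg * Mh) => u Zu; rewrite normrM ler_pM //; [exact: HMg | exact: HMh].
Qed.

Lemma Dge z : Z z -> kmin <= Rintegral mu (Z : set ZB') (fun u => kappa (z, u)).
Proof.
move=> Zz; have := Rintegral_cst mu mZ kmin.
rewrite (_ : fine (mu (Z : set ZB')) = 1); last by rewrite muZ.
rewrite mulr1 => <-; apply: le_Rintegral => //.
- exact: mZ.
- apply: integ; first exact: measurable_cst.
  by exists `|kmin| => u _.
- exact: cinteg (kcont Zz).
- by move=> u Zu; exact: kle.
Qed.

Lemma K_diff (g1 g2 : T -> R) (M : R) z : Cfun Z g1 -> Cfun Z g2 ->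
  (forall u, Z u -> `|g1 u - g2 u| <= M) -> Z z ->
  `|smooth Z kappa mu g1 z - smooth Z kappa mu g2 z| <= M.
Proof.
move=> c1 c2 HM Zz; rewrite /smooth.
set D := Rintegral mu (Z : set ZB') (fun u : ZB' => kappa (z, u)).
have D0 : 0 < D by apply: lt_le_trans km0 (Dge Zz).
have ck' := kcont Zz.
rewrite -mulrBl -RintegralB //; [|exact: mZ|exact: integM|exact: integM].
rewrite normrM normfV (gtr0_norm D0) ler_pdivrMr //.
apply: le_trans (le_normr_Rintegral _ _) _; first exact: mZ.
  apply: integ.
    exact: measurable_funB (measurable_funM (cmeas ck') (cmeas c1))
      (measurable_funM (cmeas ck') (cmeas c2)).
  have [Mk HMk] := cbound ck'; have [M1 HM1] := cbound c1;
  have [M2 HM2] := cbound c2.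
  exists (Mk * M1 + Mk * M2) => u Zu.
  apply: le_trans (ler_normB _ _) _.
  by rewrite lerD // normrM ler_pM //; [exact: HMk|exact: HM1|exact: HMk|exact: HM2].
rewrite mulrC /D -RintegralZr; last exact: cinteg.
  2: exact: mZ.
apply: le_Rintegral; first exact: mZ.
- apply: integ.
    apply: measurableT_comp; first exact: normr_measurable.
    exact: measurable_funB (measurable_funM (cmeas ck') (cmeas c1))
      (measurable_funM (cmeas ck') (cmeas c2)).
  have [Mk HMk] := cbound ck'; have [M1 HM1] := cbound c1;
  have [M2 HM2] := cbound c2.
  exists (Mk * M1 + Mk * M2) => u Zu; rewrite normr_id.
  apply: le_trans (ler_normB _ _) _.
  by rewrite lerD // normrM ler_pM //; [exact: HMk|exact: HM1|exact: HMk|exact: HM2].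
- apply: integ; first exact: measurable_funM (cmeas ck') (measurable_cst _).
  have [Mk HMk] := cbound ck'; exists (Mk * `|M|) => u Zu.
  by rewrite normrM ler_pM //; exact: HMk.
- move=> u Zu /=; rewrite -mulrBr normrM (gtr0_norm (kpos Zz Zu)).
  by rewrite ler_wpM2l // ?HM // ltW // kpos.
Qed.

Lemma Ncont (g : T -> R) : Cfun Z g ->
  Cfun Z (fun z => Rintegral mu (Z : set ZB') (fun u : ZB' => kappa (z, u) * g u)).
Proof.
move=> cg; apply/subspace_continuousP => z Zz; apply/cvgrPdist_lt => e e0.
have [B HB] := cbound cg.
set B1 := `|B| + 1.
have B10 : 0 < B1 by rewrite /B1 ltr_pwDr.
have e2 : 0 < e / (2 * B1) by rewrite divr_gt0 // mulr_gt0.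
have := tube cZ ck Zz e2.
rewrite near_withinE; apply: filterS => t Ht Zt.
have Hk := Ht Zt.
rewrite -RintegralB //; [|exact: mZ|exact: integM (kcont Zz) cg
  |exact: integM (kcont Zt) cg].
apply: le_lt_trans (le_normr_Rintegral _ _) _; first exact: mZ.
  apply: integ.
    exact: measurable_funB (measurable_funM (cmeas (kcont Zz)) (cmeas cg))
      (measurable_funM (cmeas (kcont Zt)) (cmeas cg)).
  have [Mk HMk] := cbound (kcont Zz); have [Mk' HMk'] := cbound (kcont Zt).
  exists (Mk * B + Mk' * B) => u Zu.
  apply: le_trans (ler_normB _ _) _.
  by rewrite lerD // normrM ler_pM //; [exact: HMk|exact: HB|exact: HMk'|exact: HB].
apply: (@le_lt_trans _ _ (Rintegral mu (Z : set ZB') (fun _ => e / 2))).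
  apply: le_Rintegral; first exact: mZ.
  - apply: integ.
      apply: measurableT_comp; first exact: normr_measurable.
      exact: measurable_funB (measurable_funM (cmeas (kcont Zz)) (cmeas cg))
        (measurable_funM (cmeas (kcont Zt)) (cmeas cg)).
    have [Mk HMk] := cbound (kcont Zz); have [Mk' HMk'] := cbound (kcont Zt).
    exists (Mk * B + Mk' * B) => u Zu; rewrite normr_id.
    apply: le_trans (ler_normB _ _) _.
    by rewrite lerD // normrM ler_pM //; [exact: HMk|exact: HB|exact: HMk'|exact: HB].
  - by apply: integ; [exact: measurable_cst | exists `|e / 2| => u _].
  - move=> u Zu; rewrite -mulrBl normrM.
    have h1 : `|kappa (z, u) - kappa (t, u)| <= e / (2 * B1).
      by rewrite distrC ltW // Hk.
    have h2 : `|g u| <= B1.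
      by rewrite (le_trans (HB u Zu)) // /B1 (le_trans (ler_norm B)) // lerDl.
    apply: le_trans (ler_pM (normr_ge0 _) (normr_ge0 _) h1 h2) _.
    rewrite invfM mulrA mulfVK; last by rewrite gt_eqF.
    by [].
rewrite Rintegral_cst; last exact: mZ.
rewrite (_ : fine (mu (Z : set ZB')) = 1); last by rewrite muZ.
by rewrite mulr1 ltr_pdivrMr // ltr_pMr // ltr1n.
Qed.

Lemma Kcont (g : T -> R) : Cfun Z g -> Cfun Z (smooth Z kappa mu g).
Proof.
move=> cg; apply/subspace_continuousP => z Zz.
have h1 := (subspace_continuousP _ _).1 (Ncont cg) z Zz.
have c1 : Cfun Z (fun _ : T => (1 : R)) by move=> x; exact: cvg_cst.
have h2 := (subspace_continuousP _ _).1 (Ncont c1) z Zz.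
have E : forall z', Rintegral mu (Z : set ZB') (fun u : ZB' => kappa (z', u) * 1) =
   Rintegral mu (Z : set ZB') (fun u : ZB' => kappa (z', u)).
  by move=> z'; apply: eq_Rintegral => u _; rewrite mulr1.
have D0 : Rintegral mu (Z : set ZB') (fun u : ZB' => kappa (z, u)) != 0.
  by rewrite gt_eqF // (lt_le_trans km0 (Dge Zz)).
rewrite /smooth; apply: cvgM h1 _; apply: cvgV => //.
by under eq_fun do rewrite -E; rewrite -E.
Qed.

Let c := 1 / (1 - gamma).
Lemma c_gt0 : 0 < c.
Proof. by case/andP: hg => _ g1; rewrite /c divr_gt0 // subr_gt0. Qed.

Definition G (Q : T -> R) (x : 'rV[R]_dX) := sup [set clip gamma (Q (x, a')) | a' in A].

Lemma G_bound Q x : `|G Q x| <= c.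
Proof.
apply: (sup_img_bound A0) => a _; apply: clip_bound; exact: ltW c_gt0.
Qed.

Lemma G_diff Q1 Q2 x M : X x -> (forall u, Z u -> `|Q1 u - Q2 u| <= M) ->
  `|G Q1 x - G Q2 x| <= M.
Proof.
move=> Xx HM; apply: (sup_img_diff (B := c) A0).
- by move=> a _; apply: clip_bound; exact: ltW c_gt0.
- by move=> a _; apply: clip_bound; exact: ltW c_gt0.
- move=> a Aa; apply: le_trans (clip_lip _ _ _) _; exact: HM.
Qed.

Lemma G_near Q x e : Cfun Z Q -> X x -> 0 < e ->
  \forall x' \near x, X x' -> `|G Q x' - G Q x| <= e.
Proof.
move=> cQ Xx e0; have := tube cA cQ Xx e0.
apply: filterS => x' Hx' Xx'.
apply: (sup_img_diff (B := c) A0).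
- by move=> a _; apply: clip_bound; exact: ltW c_gt0.
- by move=> a _; apply: clip_bound; exact: ltW c_gt0.
- move=> a Aa; apply: le_trans (clip_lip _ _ _) _; exact: ltW (Hx' Xx' a Aa).
Qed.

Lemma H_cont_w Q z : Cfun Z Q -> Z z -> {within W, continuous (fun w => G Q (f (z, w)))}.
Proof.
move=> cQ Zz; apply/subspace_continuousP => w Ww; apply/cvgrPdist_lt => e e0.
have e2 : 0 < e / 2 by rewrite divr_gt0.
have nV := G_near cQ (fX Zz Ww) e2.
have := (subspace_continuousP _ _).1 (cont_snd cf Zz) w Ww _ nV.
move=> H1.
have {H1} H2 : \forall w' \near w, W w' -> (X (f (z, w')) ->
   `|G Q (f (z, w')) - G Q (f (z, w))| <= e / 2) by exact: H1.
rewrite near_withinE; apply: filterS H2 => w' Hw' Ww' /=.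
rewrite distrC; apply: le_lt_trans (Hw' Ww' (fX Zz Ww')) _.
by rewrite ltr_pdivrMr // ltr_pMr // ltr1n.
Qed.

Lemma H_cont_z Q w : Cfun Z Q -> W w -> {within Z, continuous (fun z => G Q (f (z, w)))}.
Proof.
move=> cQ Ww; apply/subspace_continuousP => z Zz; apply/cvgrPdist_lt => e e0.
have e2 : 0 < e / 2 by rewrite divr_gt0.
have nV := G_near cQ (fX Zz Ww) e2.
have := (subspace_continuousP _ _).1 (cont_fst cf Ww) z Zz _ nV.
move=> H1.
have {H1} H2 : \forall z' \near z, Z z' -> (X (f (z', w)) ->
   `|G Q (f (z', w)) - G Q (f (z, w))| <= e / 2) by exact: H1.
rewrite near_withinE; apply: filterS H2 => z' Hz' Zz' /=.
rewrite distrC; apply: le_lt_trans (Hz' Zz' (fX Zz' Ww)) _.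
by rewrite ltr_pdivrMr // ltr_pMr // ltr1n.
Qed.

Lemma I_cont Q : Cfun Z Q ->
  Cfun Z (fun z => Rintegral psi (W : set (WB R dW)) (fun w : WB R dW => G Q (f (z, w)))).
Proof.
move=> cQ; apply/subspace_continuousP => z Zz; apply: seq_within => // u Zu uz.
pose F n := fun w : WB R dW => (G Q (f (u n, w)))%:E.
pose F0 := fun w : WB R dW => (G Q (f (z, w)))%:E.
have mF : forall n, measurable_fun (W : set (WB R dW)) (F n).
  move=> n; apply/measurable_EFinP.
  exact: (cont_measurable mW (H_cont_w cQ (Zu n))).
have mF0 : measurable_fun (W : set (WB R dW)) F0.
  apply/measurable_EFinP.
  exact: (cont_measurable mW (H_cont_w cQ Zz)).
have conv : {ae psi, forall x, (W : set (WB R dW)) x -> F ^~ x @ \oo --> F0 x}.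
  apply: aeW => w Ww; rewrite /F /F0.
  apply: cvg_EFin.
    by apply: nearW => n.
  have := (subspace_continuousP _ _).1 (H_cont_z cQ Ww) z Zz.
  exact: cvg_comp (seq_to_within Zu uz).
have ig : psi.-integrable (W : set (WB R dW)) (EFin \o cst c).
  exact: finite_measure_integrable_cst.
have bnd : {ae psi, forall x n, (W : set (WB R dW)) x -> (`|F n x| <= (EFin \o cst c) x)%E}.
  by apply: aeW => w n Ww; rewrite /F /= lee_fin; exact: G_bound.
have [iF0 _ Hc] := dominated_convergence mW mF mF0 conv ig bnd.
have fin0 : (\int[psi]_(x in (W : set (WB R dW))) F0 x)%E \is a fin_num.
  exact: integrable_fin_num.
rewrite -(fineK fin0) in Hc.
exact: fine_cvg Hc.
Qed.

Local Notation WW := (W : set (WB R dW)).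

Lemma winteg_gen (h : WB R dW -> R) : measurable_fun WW h ->
  (exists M, forall w, W w -> `|h w| <= M) -> psi.-integrable WW (EFin \o h).
Proof.
move=> mh [M HM]; apply: measurable_bounded_integrable => //.
- by apply: (le_lt_trans (probability_le1 psi mW)); rewrite ltry.
- exists M; split; first exact: num_real.
  by move=> y My w Ww; rewrite /= (le_trans (HM w Ww)) // ltW.
Qed.

Lemma wmeas Q z : Cfun Z Q -> Z z -> measurable_fun WW (fun w : WB R dW => G Q (f (z, w))).
Proof. move=> cQ Zz; exact: (cont_measurable mW (H_cont_w cQ Zz)). Qed.

Lemma winteg Q z : Cfun Z Q -> Z z ->
  psi.-integrable WW (EFin \o (fun w : WB R dW => G Q (f (z, w)))).
Proof.
move=> cQ Zz; apply: measurable_bounded_integrable => //.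
- by apply: (le_lt_trans (probability_le1 psi mW)); rewrite ltry.
- exact: (cont_measurable mW (H_cont_w cQ Zz)).
- exists c; split; first exact: num_real.
  by move=> y cy w Ww; rewrite /= (le_trans (G_bound _ _)) // ltW.
Qed.

Lemma winteg_cst (k : R) : psi.-integrable WW (EFin \o (fun _ : WB R dW => k)).
Proof. exact: finite_measure_integrable_cst. Qed.

Lemma Bcont Q : Cfun Z Q -> Cfun Z (bellman gamma A W psi f r Q).
Proof.
move=> cQ; apply/subspace_continuousP => z Zz; rewrite /bellman.
apply: cvgD; first exact: (subspace_continuousP _ _).1 cr z Zz.
apply: cvgM; first exact: cvg_cst.
exact: (subspace_continuousP _ _).1 (I_cont cQ) z Zz.
Qed.

Lemma Bdiff Q1 Q2 M z : Cfun Z Q1 -> Cfun Z Q2 ->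
  (forall u, Z u -> `|Q1 u - Q2 u| <= M) -> Z z ->
  `|bellman gamma A W psi f r Q1 z - bellman gamma A W psi f r Q2 z| <= gamma * M.
Proof.
move=> c1 c2 HM Zz; rewrite /bellman opprD addrACA subrr add0r -mulrBr.
have g0 : 0 <= gamma by case/andP: hg => /ltW.
rewrite normrM (ger0_norm g0) ler_wpM2l //.
rewrite -RintegralB //; [|exact: winteg|exact: winteg].
apply: le_trans (le_normr_Rintegral _ _) _ => //.
  apply: winteg_gen; first exact: measurable_funB (wmeas c1 Zz) (wmeas c2 Zz).
  by exists (c + c) => w _; apply: le_trans (ler_normB _ _) _; rewrite lerD // G_bound.
apply: (@le_trans _ _ (Rintegral psi WW (fun _ => M))).
  apply: le_Rintegral => //.
  - apply: winteg_gen.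
      apply: measurableT_comp; first exact: normr_measurable.
      exact: measurable_funB (wmeas c1 Zz) (wmeas c2 Zz).
    by exists (c + c) => w _; rewrite normr_id; apply: le_trans (ler_normB _ _) _; rewrite lerD // G_bound.
  - exact: winteg_cst.
  - by move=> w Ww /=; apply: G_diff => //; exact: fX.
rewrite Rintegral_cst // (_ : fine (psi WW) = 1) ?mulr1 //.
by rewrite psiW.
Qed.

Lemma Bbound Q z : Cfun Z Q -> Z z -> `|bellman gamma A W psi f r Q z| <= c.
Proof.
move=> cQ Zz; rewrite /bellman.
have g0 : 0 <= gamma by case/andP: hg => /ltW.
apply: le_trans (ler_normD _ _) _.
have -> : c = 1 + gamma * c.
  case/andP: hg => _ g1; rewrite /c; field; lra.
apply: lerD; first exact: rb.
rewrite normrM (ger0_norm g0) ler_wpM2l //.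
apply: le_trans (le_normr_Rintegral _ _) _ => //; first exact: winteg.
apply: (@le_trans _ _ (Rintegral psi WW (fun _ => c))).
  apply: le_Rintegral => //.
  - apply: winteg_gen.
      apply: measurableT_comp; first exact: normr_measurable.
      exact: wmeas.
    by exists c => w _; rewrite normr_id G_bound.
  - exact: winteg_cst.
  - by move=> w Ww /=; exact: G_bound.
rewrite Rintegral_cst // (_ : fine (psi WW) = 1) ?mulr1 //.
by rewrite psiW.
Qed.

Lemma K0 z : smooth Z kappa mu (fun _ => 0) z = 0.
Proof.
rewrite /smooth (_ : Rintegral _ _ _ = 0) ?mul0r //.
rewrite (@eq_Rintegral _ _ _ mu _ (fun _ => 0)); last by move=> u _; rewrite mulr0.
by rewrite Rintegral_cst ?mul0r //; exact: mZ.
Qed.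

Lemma main_res :
  let Z := X `*` A in
  let K := smooth Z kappa mu in
  let Tmu := fun Q => K (bellman gamma A W psi f r Q) in
  (forall q1 q2, Cfun Z q1 -> Cfun Z q2 ->
     supnorm Z (K q1 \- K q2) <= supnorm Z (q1 \- q2)) /\
  (forall Q, Cfun Z Q -> Cfun Z (Tmu Q)) /\
  (forall Q1 Q2, Cfun Z Q1 -> Cfun Z Q2 ->
     supnorm Z (Tmu Q1 \- Tmu Q2) <= gamma * supnorm Z (Q1 \- Q2)) /\
  (exists qstar, Cfun Z qstar /\ (forall z, Z z -> Tmu qstar z = qstar z) /\
     supnorm Z qstar <= 1 / (1 - gamma) /\
     (forall q, Cfun Z q -> (forall z, Z z -> Tmu q z = q z) ->
        forall z, Z z -> q z = qstar z)).
Proof.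
move=> Z' K Tmu; rewrite {}/Tmu {}/K {}/Z'.
have bndB : forall Q1 Q2 : T -> R, Cfun Z Q1 -> Cfun Z Q2 ->
    exists M, forall z, Z z -> `|(Q1 \- Q2) z| <= M.
  move=> Q1 Q2 c1 c2; have [M1 H1] := cbound c1.
  have [M2 H2] := cbound c2.
  exists (M1 + M2) => z Zz /=; apply: le_trans (ler_normB _ _) _.
  by rewrite lerD // ?H1 ?H2.
have g01 : 0 <= gamma < 1 by case/andP: hg => /ltW -> ->.
have P3' : forall Q1 Q2 : T -> R, Cfun Z Q1 -> Cfun Z Q2 -> forall z, Z z ->
    `|smooth Z kappa mu (bellman gamma A W psi f r Q1) z -
      smooth Z kappa mu (bellman gamma A W psi f r Q2) z|
    <= gamma * supnorm Z (Q1 \- Q2).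
  move=> Q1 Q2 c1 c2 z Zz; have [M HM] := bndB _ _ c1 c2.
  apply: K_diff => //; [exact: Bcont|exact: Bcont|].
  move=> u Zu; apply: Bdiff => // v Zv; exact: (supnorm_ub HM Zv).
have P2 : forall Q, Cfun Z Q -> Cfun Z (smooth Z kappa mu (bellman gamma A W psi f r Q)).
  by move=> Q cQ; apply: Kcont; exact: Bcont.
split.
  move=> q1 q2 c1 c2; have [M HM] := bndB _ _ c1 c2.
  apply: supnorm_le Z0 _ => z Zz /=.
  apply: K_diff => // u Zu; exact: (supnorm_ub HM Zu).
split; first exact: P2.
split.
  move=> Q1 Q2 c1 c2; apply: supnorm_le Z0 _ => z Zz /=; exact: P3'.
have [qs [cqs fqs]] := fixpoint_gen cZ Z0 g01 P2 P3'.
exists qs; split => //; split => //; split.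
  apply: supnorm_le Z0 _ => z Zz; rewrite -fqs //.
  rewrite -[X in `|X|]subr0 -(K0 z); apply: K_diff => //.
  - exact: Bcont.
  - by move=> x; exact: cvg_cst.
  - by move=> u Zu; rewrite subr0; exact: Bbound.
move=> q cq fq z Zz.
have [M HM] := bndB _ _ cq cqs.
set S := supnorm Z (q \- qs).
have S0 : 0 <= S by exact: supnorm_ge0 Z0 HM.
have SS : S <= gamma * S.
  apply: supnorm_le Z0 _ => u Zu /=; rewrite -fq // -fqs //; exact: P3'.
have S00 : S = 0.
  case/andP: hg => _ g1; apply/eqP; rewrite eq_le S0 andbT.
  have : (1 - gamma) * S <= 0 by rewrite mulrBl mul1r subr_le0.
  by rewrite pmulr_rle0 // subr_gt0.
apply/eqP; rewrite -subr_eq0 -normr_le0 -S00.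
exact: (supnorm_ub HM Zz).
Qed.

End main.

Unset Implicit Arguments. Set Strict Implicit.

Theorem lemma1 (R : realType) (dX dA dW : nat) (gamma : R)
  (X : set 'rV[R]_dX) (A : set 'rV[R]_dA) (W : set 'rV[R]_dW)
  (psi : probability (WB R dW) R)
  (f : ZT R dX dA * 'rV[R]_dW -> 'rV[R]_dX) (r : ZT R dX dA -> R)
  (kappa : ZT R dX dA * ZT R dX dA -> R) (kmin : R) :
  0 < gamma < 1 ->
  X !=set0 -> compact X -> A !=set0 -> compact A ->
  measurable (W : set (WB R dW)) -> psi (W : set (WB R dW)) = 1%E ->
  {within (X `*` A) `*` W, continuous f} ->
  (forall z w, (X `*` A) z -> W w -> X (f (z, w))) ->
  {within X `*` A, continuous r} ->
  (forall z, (X `*` A) z -> `|r z| <= 1) ->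
  {within (X `*` A) `*` (X `*` A), continuous kappa} ->
  (forall z u, (X `*` A) z -> (X `*` A) u -> 0 < kappa (z, u)) ->
  0 < kmin ->
  (forall z u, (X `*` A) z -> (X `*` A) u -> kmin <= kappa (z, u)) ->
  forall mu : probability (ZB R dX dA) R,
  mu (X `*` A : set (ZB R dX dA)) = 1%E ->
  let Z := X `*` A in
  let K := smooth Z kappa mu in
  let Tmu := fun Q => K (bellman gamma A W psi f r Q) in
  (forall q1 q2, Cfun Z q1 -> Cfun Z q2 ->
     supnorm Z (K q1 \- K q2) <= supnorm Z (q1 \- q2)) /\
  (forall Q, Cfun Z Q -> Cfun Z (Tmu Q)) /\
  (forall Q1 Q2, Cfun Z Q1 -> Cfun Z Q2 ->
     supnorm Z (Tmu Q1 \- Tmu Q2) <= gamma * supnorm Z (Q1 \- Q2)) /\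
  (exists qstar, Cfun Z qstar /\ (forall z, Z z -> Tmu qstar z = qstar z) /\
     supnorm Z qstar <= 1 / (1 - gamma) /\
     (forall q, Cfun Z q -> (forall z, Z z -> Tmu q z = q z) ->
        forall z, Z z -> q z = qstar z)).
Proof.
move=> hg X0 cX A0 cA mW psiW cf fX cr rb ck kpos km0 kle mu muZ.
exact: (main_res hg X0 cX A0 cA mW psiW cf fX cr rb ck kpos km0 kle muZ).
Qed.
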